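(* Let $g$ be a connected graph and $S$ a minimal separator of $g$ that is a clique of $g$. Let $c_1,\dots,c_k$ be the connected components of $g\setminus S$ and $\mathcal{C}(S)=\{g_{|V(c_i)\cup N_g(V(c_i))}: 1\le i\le k\}$. For any two distinct graphs $d_1,d_2\in\mathcal{C}(S)$, the sets of minimal separators of $d_1$ and of $d_2$ are disjoint.
   Context: Graphs are finite, simple and undirected. $g_{|U}$ is the subgraph induced by $U$, $g\setminus S=g_{|V(g)\setminus S}$, and $N_g(U)=\bigcup_{v\in U}N_g(v)\setminus U$. For nodes $u,v$, a set $S\subseteq V(g)$ is a $(u,v)$-separator if $u,v$ lie in distinct connected components of $g\setminus S$; it is a minimal $(u,v)$-separator if no proper subset is one; $S$ is a minimal separator if it is a minimal $(u,v)$-separator for some $u,v$. *)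

(* Defs.v *)
(* A finite simple graph g is a finType T of vertices with a
   symmetric irreflexive edge relation e. Induced subgraphs g_{|U} are
   represented by their vertex set U : {set T}. *)
From mathcomp Require Import all_boot.
Set Implicit Arguments. Unset Strict Implicit. Unset Printing Implicit Defensive.

Section Graphs.
Variables (T : finType) (e : rel T).

Definition induced_rel (W : {set T}) : rel T :=
  [rel x y | [&& x \in W, y \in W & e x y]].

Definition conn_in (W : {set T}) (u v : T) : bool :=
  [&& u \in W, v \in W & connect (induced_rel W) u v].

Definition connected_in (U : {set T}) : Prop :=
  forall u v, u \in U -> v \in U -> conn_in U u v.

Definition separator (U S : {set T}) (u v : T) : Prop :=
  [/\ S \subset U, u \in U :\: S, v \in U :\: S & ~~ conn_in (U :\: S) u v].

Definition min_separator_uv (U S : {set T}) (u v : T) : Prop :=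
  separator U S u v /\ (forall S' : {set T}, S' \proper S -> ~ separator U S' u v).

Definition min_separator (U S : {set T}) : Prop :=
  exists u v, min_separator_uv U S u v.

Definition is_clique (S : {set T}) : Prop :=
  forall x y, x \in S -> y \in S -> x != y -> e x y.

Definition nbhd (U : {set T}) : {set T} :=
  [set y | [exists x in U, e x y]] :\: U.

Definition component (S : {set T}) (x : T) : {set T} :=
  [set y | conn_in (~: S) x y].

Definition closed_comp (S : {set T}) (x : T) : {set T} :=
  component S x :|: nbhd (component S x).

End Graphs.

(* Main.v *)
Require Import Defs.
From mathcomp Require Import all_boot.
Set Implicit Arguments. Unset Strict Implicit.

Lemma lift_connect (T : finType) (r r' : rel T) (P : pred T) x y :
  P x -> (forall a b, P a -> r a b -> P b && r' a b) ->
  connect r x y -> connect r' x y.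
Proof.
move=> Px H /connectP [p]; elim: p x Px => [|z p IH] x Px /=.
  by move=> _ ->; exact: connect0.
case/andP=> rxz pz ly; case/andP: (H _ _ Px rxz) => Pz r'xz.
exact: connect_trans (connect1 r'xz) (IH _ Pz pz ly).
Qed.

Lemma induced_sym (T : finType) (e : rel T) (e_sym : symmetric e) W :
  symmetric (induced_rel e W).
Proof. move=> x y; rewrite /induced_rel /= e_sym; by case: (x \in W); case: (y \in W). Qed.

Section L.
Variables (T : finType) (e : rel T) (e_sym : symmetric e).

Lemma comp_eq (S : {set T}) x y : y \in component e S x ->
  component e S x = component e S y.
Proof.
rewrite inE => /and3P [Hx Hy Hxy]; apply/setP => w; rewrite !inE /conn_in Hx Hy /=.
have cs := sym_connect_sym (induced_sym e_sym (~: S)).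
apply/idP/idP => /andP [Hw c]; rewrite Hw //=.
  by apply: connect_trans c; rewrite cs.
exact: connect_trans Hxy c.
Qed.

Lemma comp_self (S : {set T}) x : x \notin S -> x \in component e S x.
Proof. by move=> Hx; rewrite !inE /conn_in !inE Hx connect0. Qed.

Lemma comp_notS (S : {set T}) x y : y \in component e S x -> y \notin S.
Proof. by rewrite !inE => /and3P [_]; rewrite inE. Qed.

Lemma comp_step (S : {set T}) x a b : a \in component e S x -> b \notin S -> e a b ->
  b \in component e S x.
Proof.
move=> Ha Hb eab; have HaS := comp_notS Ha.
move: Ha; rewrite inE => /and3P [Hx _ c].
have HbS : b \in ~: S by rewrite inE.
rewrite inE /conn_in Hx HbS /=.
apply: connect_trans c (connect1 _); have HaS' : a \in ~: S by rewrite inE.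
by rewrite /induced_rel /= HaS' HbS eab.
Qed.

Lemma closed_connected (S X : {set T}) x : x \notin S ->
  (forall y, y \in X -> y \notin component e S x) ->
  forall u, u \in closed_comp e S x :\: X ->
  connect (induced_rel e (closed_comp e S x :\: X)) x u.
Proof.
move=> HxS dis.
set K := component e S x; set W := closed_comp e S x :\: X.
have KW : forall a, a \in K -> a \in W.
  move=> a Ha; rewrite /W /closed_comp -/K in_setD in_setU Ha orTb andbT.
  by apply/negP => aX; move: (dis a aX); rewrite Ha.
have caseK : forall u, u \in K -> connect (induced_rel e W) x u.
  move=> u Hu; move: (Hu); rewrite inE => /and3P [_ _ c].
  apply: (lift_connect (P := mem K) _ _ c); first exact: comp_self.
  move=> a b /= Ha /and3P [_ Hb eab]; rewrite inE in Hb.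
  have Kb : b \in K by exact: comp_step Ha Hb eab.
  by rewrite Kb /induced_rel /= KW // KW.
move=> u Hu; have Hu' := Hu; rewrite /W /closed_comp -/K in_setD in_setU in Hu'.
case/andP: Hu' => _ /orP [HK | Hn]; first exact: caseK.
move: Hn; rewrite /nbhd in_setD inE => /andP [_ /existsP [a /andP [Ha eau]]].
apply: connect_trans (caseK _ Ha) (connect1 _).
by rewrite /induced_rel /= KW // Hu.
Qed.

End L.

Theorem lemma7 (T : finType) (e : rel T) (e_sym : symmetric e)
    (e_irr : irreflexive e) (S : {set T}) :
  connected_in e [set: T] ->
  min_separator e [set: T] S ->
  is_clique e S ->
  forall x1 x2 : T, x1 \notin S -> x2 \notin S ->
  closed_comp e S x1 != closed_comp e S x2 ->
  forall X : {set T},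
    ~ (min_separator e (closed_comp e S x1) X /\
       min_separator e (closed_comp e S x2) X).
Proof.
move=> _ _ _ x1 x2 H1 H2 neq X [[u [v [[_ Hu Hv nc] _]]] [_ [_ [[sub _ _ _] _]]]].
have dis : forall y, y \in X -> y \notin component e S x1.
  move=> y yX; apply/negP => yK.
  move/subsetP: sub => /(_ y yX); rewrite inE => /orP [yK2 | yN].
    move: neq; rewrite /closed_comp (comp_eq e_sym yK) (comp_eq e_sym yK2).
    by rewrite eqxx.
  move: yN; rewrite /nbhd in_setD inE => /andP [ynK2 /existsP [z /andP [zK2 ezy]]].
  by rewrite (comp_step zK2 (comp_notS yK) ezy) in ynK2.
move/negP: nc; apply; rewrite /conn_in Hu Hv /=.
have cs := sym_connect_sym (induced_sym e_sym (closed_comp e S x1 :\: X)).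
apply: connect_trans (closed_connected H1 dis Hv).
by rewrite cs; apply: closed_connected.
Qed.
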